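(* Consider the LSTM network with input $u\in\mathbb{R}^{n_u}$, state $\chi=(x,\xi)\in\mathbb{R}^{n_x}\times\mathbb{R}^{n_x}$ and output $y\in\mathbb{R}^{n_y}$: \[ \begin{aligned} x^+ &= \sigma_g(W_f u + U_f \xi + b_f)\circ x + \sigma_g(W_i u + U_i \xi + b_i)\circ \sigma_c(W_c u + U_c \xi + b_c),\\ \xi^+ &= \sigma_g(W_o u + U_o \xi + b_o)\circ \sigma_c(x^+),\\ y &= C\xi + b_y, \end{aligned} \] with inputs restricted to $\mathcal{U}=[-u_{\max},u_{\max}]^{n_u}$. Define \[ A=\begin{bmatrix}\bar{\sigma}_g^f & \bar{\sigma}_g^i\|U_c\|\\ \bar{\sigma}_g^o\bar{\sigma}_g^f & \bar{\sigma}_g^o\bar{\sigma}_g^i\|U_c\|\end{bmatrix}. \] If $\rho(A)<1$, then the network is input-to-state stable (ISS) with respect to the input $u$ and the bias $b_c$: there exist $\beta\in\mathcal{KL}$ and $\gamma_v,\gamma_b\in\mathcal{K}_\infty$ such that for every $k\in\mathbb{Z}_{\ge 0}$, every initial state $\chi_0\in\mathcal{X}$, and every input sequence $u(0),u(1),\dots$ with $u(\tau)\in\mathcal{U}$, \[ \|\chi(k)\|\le \beta(\|\chi_0\|,k)+\gamma_v\big(\max_{h\ge0}\|u(h)\|\big)+\gamma_b(\|b_c\|). \]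
   Context: $\sigma_g(t)=1/(1+e^{-t})$ and $\sigma_c(t)=\tanh(t)$ are applied entrywise; $\circ$ is the entrywise (Hadamard) product. $W_\star\in\mathbb{R}^{n_x\times n_u}$, $U_\star\in\mathbb{R}^{n_x\times n_x}$ ($\star\in\{f,i,o,c\}$), $C\in\mathbb{R}^{n_y\times n_x}$, $b_\star\in\mathbb{R}^{n_x}$, $b_y\in\mathbb{R}^{n_y}$. $\|\cdot\|$ is the Euclidean norm for vectors and the induced 2-norm for matrices; $\|\cdot\|_\infty$ is the induced $\infty$-norm (maximum absolute row sum); $\rho(\cdot)$ is the spectral radius. For $\star\in\{f,i,o\}$, $\bar{\sigma}_g^\star=\sigma_g\big(\|[\,W_\star u_{\max}\ \ U_\star\ \ b_\star\,]\|_\infty\big)$, where $[\cdot\ \cdot\ \cdot]$ is horizontal concatenation; $\bar{\sigma}_c^c=\sigma_c\big(\|[\,W_c u_{\max}\ \ U_c\ \ b_c\,]\|_\infty\big)$. The state set is $\mathcal{X}=\{(x,\xi): |x_{(j)}|\le \bar{\sigma}_g^i\bar{\sigma}_c^c/(1-\bar{\sigma}_g^f),\ \xi_{(j)}\in(-1,1),\ j=1,\dots,n_x\}$. A $\mathcal{K}$ function is continuous, strictly increasing, zero at zero; $\mathcal{K}_\infty$ additionally unbounded; $\beta\in\mathcal{KL}$ means $\beta(\cdot,k)\in\mathcal{K}$ for each $k$, $\beta(s,\cdot)$ strictly decreasing with $\beta(s,k)\to0$ as $k\to\infty$ for $s>0$. *)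

(* Defs.v *)
From HB Require Import structures.
From mathcomp Require Import all_boot all_order all_algebra.
From mathcomp Require Import all_classical all_reals all_analysis.
From mathcomp Require Import complex.
Set Implicit Arguments. Unset Strict Implicit. Unset Printing Implicit Defensive.
Import Order.TTheory GRing.Theory Num.Theory.
Import numFieldNormedType.Exports.
Local Open Scope classical_set_scope.
Local Open Scope ring_scope.

Section LSTMDefs.
Variable R : realType.

Definition sigma_g (t : R) : R := 1 / (1 + expR (- t)).
Definition tanhR (t : R) : R := (expR t - expR (- t)) / (expR t + expR (- t)).
Definition sigma_c (t : R) : R := tanhR t.

Definition entrywise m n (f : R -> R) (M : 'M[R]_(m, n)) : 'M[R]_(m, n) :=
  map_mx f M.
Definition hadamard m n (A B : 'M[R]_(m, n)) : 'M[R]_(m, n) :=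
  \matrix_(i, j) (A i j * B i j).

Definition vnorm n (v : 'cV[R]_n) : R := Num.sqrt (\sum_(i < n) v i 0 ^+ 2).

Definition mnorm2 m n (M : 'M[R]_(m, n)) : R :=
  sup [set vnorm (M *m v) | v in [set v : 'cV[R]_n | vnorm v <= 1]].

Definition mnorm_inf m n (M : 'M[R]_(m, n)) : R :=
  \big[Num.max/0]_(i < m) \sum_(j < n) `|M i j|.

Definition cmodulus (z : complex R) : R := Num.sqrt (complex.Re z ^+ 2 + complex.Im z ^+ 2).
Definition spectral_radius n (A : 'M[R]_n) : R :=
  sup [set cmodulus l | l in
        [set l : complex R | eigenvalue (map_mx (fun x : R => Complex x 0) A) l]].

Definition class_K (a : R -> R) : Prop :=
  {within [set s : R | 0 <= s], continuous a} /\
  (forall s t : R, 0 <= s -> s < t -> a s < a t) /\ a 0 = 0.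
Definition class_Kinf (a : R -> R) : Prop :=
  class_K a /\ (forall M : R, exists s : R, 0 <= s /\ M < a s).
Definition class_KL (b : R -> nat -> R) : Prop :=
  (forall k : nat, class_K (fun s => b s k)) /\
  (forall s : R, 0 < s ->
     (forall k : nat, b s k.+1 < b s k) /\ (b s k @[k --> \oo] --> 0)).

Variables nu nx ny : nat.

Definition lstm_state := ('cV[R]_nx * 'cV[R]_nx)%type.

Definition state_norm (chi : lstm_state) : R := vnorm (col_mx chi.1 chi.2).

Definition lstm_step (Wf Wi Wo Wc : 'M[R]_(nx, nu)) (Uf Ui Uo Uc : 'M[R]_nx)
    (bf bi bo bc : 'cV[R]_nx) (chi : lstm_state) (u : 'cV[R]_nu) : lstm_state :=
  let x := chi.1 in let xi := chi.2 in
  let xp := hadamard (entrywise sigma_g (Wf *m u + Uf *m xi + bf)) x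
          + hadamard (entrywise sigma_g (Wi *m u + Ui *m xi + bi))
                     (entrywise sigma_c (Wc *m u + Uc *m xi + bc)) in
  let xip := hadamard (entrywise sigma_g (Wo *m u + Uo *m xi + bo))
                      (entrywise sigma_c xp) in
  (xp, xip).

Fixpoint lstm_traj (Wf Wi Wo Wc : 'M[R]_(nx, nu)) (Uf Ui Uo Uc : 'M[R]_nx)
    (bf bi bo bc : 'cV[R]_nx) (chi0 : lstm_state) (u : nat -> 'cV[R]_nu)
    (k : nat) : lstm_state :=
  match k with
  | 0%N => chi0
  | k'.+1 => lstm_step Wf Wi Wo Wc Uf Ui Uo Uc bf bi bo bc
               (lstm_traj Wf Wi Wo Wc Uf Ui Uo Uc bf bi bo bc chi0 u k') (u k')
  end.

(* output map y = C xi + b_y (not needed for the ISS statement) *)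
Definition lstm_output (C : 'M[R]_(ny, nx)) (by_ : 'cV[R]_ny) (chi : lstm_state)
  : 'cV[R]_ny := C *m chi.2 + by_.

Definition input_set (umax : R) : set 'cV[R]_nu :=
  [set u | forall j : 'I_nu, - umax <= u j 0 <= umax].

Definition gate_bound (umax : R) (W : 'M[R]_(nx, nu)) (U : 'M[R]_nx)
    (b : 'cV[R]_nx) : R :=
  mnorm_inf (row_mx (row_mx (umax *: W) U) b).
Definition sbar_g umax W U b : R := sigma_g (gate_bound umax W U b).
Definition sbar_c umax W U b : R := sigma_c (gate_bound umax W U b).

Definition state_set (sgi scc sgf : R) : set lstm_state :=
  [set chi : lstm_state | forall j : 'I_nx,
     `|chi.1 j 0| <= sgi * scc / (1 - sgf) /\ - 1 < chi.2 j 0 < 1].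

Definition A_mat (sgf sgi sgo nUc : R) : 'M[R]_2 :=
  \matrix_(i < 2, j < 2)
    (if (i == 0 :> nat) then (if (j == 0 :> nat) then sgf else sgi * nUc)
     else (if (j == 0 :> nat) then sgo * sgf else sgo * sgi * nUc)).

End LSTMDefs.

(* Main.v *)
Require Import Defs.
From HB Require Import structures.
From mathcomp Require Import all_boot all_order all_algebra.
From mathcomp Require Import all_classical all_reals all_analysis.
From mathcomp Require Import complex.
From mathcomp Require Import ring lra.
Import Order.TTheory GRing.Theory Num.Theory.
Import numFieldNormedType.Exports.
Local Open Scope classical_set_scope.
Local Open Scope ring_scope.
Set Implicit Arguments. Unset Strict Implicit.

Section Scalar.
Variable R : realType.
Definition ff (x : R) := (1 + x) * (expR x)^-1 - expR x * (1 - x).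
Lemma dff (x : R) : is_derive x (1:R) ff (x * (expR x - (expR x)^-1)).
Proof.
rewrite /ff.
have H : expR x != 0 by rewrite expR_eq0.
apply: is_derive_eq.
rewrite /GRing.scale /=. by field.
Qed.
Lemma ff_ge0 (z : R) : 0 <= z -> 0 <= ff z.
Proof.
move=> z0.
have -> : 0 = ff 0 by rewrite /ff expR0 invr1; ring.
have der : forall x, derivable ff x 1 by move=> x; case: (dff x).
apply: (@ger0_derive1_ndecry R ff 0) => //.
- move=> x; rewrite in_itv /= andbT => x0.
  rewrite derive1E; have -> := @derive_val _ _ _ _ _ _ _ (dff x).
  apply: mulr_ge0; first exact: ltW.
  rewrite subr_ge0 -expRN ler_expR; lra.
- apply: derivable_within_continuous => x _; exact: der.
Qed.

Lemma tanhN (z : R) : tanhR (- z) = - tanhR z.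
Proof. by rewrite /tanhR opprK -mulNr opprB (addrC (expR z)). Qed.

Lemma tanh_pos (z : R) : 0 <= z -> 0 <= tanhR z <= z.
Proof.
move=> z0; have := ff_ge0 z0; rewrite /ff /tanhR -!expRN.
set E := expR z; set F := expR (- z).
have EF : E * F = 1 by rewrite /E /F expRxMexpNx_1.
have E0 : 0 < E by apply: expR_gt0.
have F0 : 0 < F by apply: expR_gt0.
have FE : F <= E by rewrite /F /E ler_expR; lra.
move=> H.
have D0 : 0 < E + F by lra.
apply/andP; split.
  apply: divr_ge0; lra.
rewrite ler_pdivrMr //.
have : 0 <= F * (1 + z) - E * (1 - z) by rewrite mulrC.
nra.
Qed.

Lemma tanh_abs (z : R) : `|tanhR z| <= `|z|.
Proof.
have [z0|z0] := leP 0 z.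
  by have /andP[a b] := tanh_pos z0; rewrite !ger0_norm.
have : 0 <= - z by lra.
move/tanh_pos; rewrite tanhN => /andP[a b].
rewrite -normrN -(normrN z) !ger0_norm //; lra.
Qed.

Lemma tanh_le1 (z : R) : `|tanhR z| <= 1.
Proof.
rewrite /tanhR.
have E0 : 0 < expR z by apply: expR_gt0.
have F0 : 0 < expR (-z) by apply: expR_gt0.
rewrite normrM normfV (gtr0_norm (addr_gt0 E0 F0)).
rewrite ler_pdivrMr ?addr_gt0 // mul1r.
rewrite ler_norml; apply/andP; split; lra.
Qed.

Lemma sigma_g_gt0 (z : R) : 0 < sigma_g z.
Proof. rewrite /sigma_g; apply: divr_gt0 => //; apply: addr_gt0 => //; exact: expR_gt0. Qed.

Lemma sigma_g_le1 (z : R) : sigma_g z <= 1.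
Proof.
rewrite /sigma_g ler_pdivrMr ?mul1r; last by apply: addr_gt0 => //; exact: expR_gt0.
have := expR_gt0 (- z); lra.
Qed.

Lemma sigma_g_mono (x y : R) : x <= y -> sigma_g x <= sigma_g y.
Proof.
move=> xy; rewrite /sigma_g !div1r.
have Hx : 0 < 1 + expR (- x) by apply: addr_gt0 => //; exact: expR_gt0.
have Hy : 0 < 1 + expR (- y) by apply: addr_gt0 => //; exact: expR_gt0.
rewrite lef_pV2 ?posrE //.
have : expR (- y) <= expR (- x) by rewrite ler_expR; lra.
lra.
Qed.
End Scalar.
Section Vec.
Variable R : realType.

Lemma CS n (a b : 'I_n -> R) :
  (\sum_i a i * b i) ^+ 2 <= (\sum_i a i ^+ 2) * (\sum_i b i ^+ 2).
Proof.
set A := \sum_i a i ^+ 2; set B := \sum_i b i ^+ 2; set S := \sum_i a i * b i.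
have B0 : 0 <= B by apply: sumr_ge0 => i _; apply: sqr_ge0.
have [Bz|Bp] := eqVneq B 0.
  have bz : forall i, b i = 0.
    move=> i; apply/eqP; rewrite -sqrf_eq0; apply/eqP.
    move/eqP: Bz; rewrite /B psumr_eq0 => [/allP H|]; last by move=> j _; apply: sqr_ge0.
    by apply/eqP/H; rewrite mem_index_enum.
  rewrite /S big1 ?expr0n ?Bz ?mulr0 // => i _; by rewrite bz mulr0.
have Bp' : 0 < B by rewrite lt_def Bp B0.
have H : 0 <= \sum_i (B * a i - S * b i) ^+ 2 by apply: sumr_ge0 => i _; apply: sqr_ge0.
have E : \sum_i (B * a i - S * b i) ^+ 2 = B * (A * B - S ^+ 2).
  have -> : \sum_i (B * a i - S * b i) ^+ 2 =
     \sum_i ((B ^+ 2) * a i ^+ 2 + (- (2 * B * S)) * (a i * b i) + S ^+ 2 * b i ^+ 2).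
    by apply: eq_bigr => i _; ring.
  rewrite !big_split /= -!mulr_sumr -/A -/B -/S; ring.
rewrite E in H.
have : 0 <= A * B - S ^+ 2 by rewrite -(pmulr_rge0 _ Bp').
lra.
Qed.

Lemma vnorm_ge0 n (v : 'cV[R]_n) : 0 <= vnorm v.
Proof. exact: sqrtr_ge0. Qed.

Lemma sumsq_ge0 n (v : 'cV[R]_n) : 0 <= \sum_i v i 0 ^+ 2.
Proof. by apply: sumr_ge0 => i _; apply: sqr_ge0. Qed.

Lemma vnorm_sq n (v : 'cV[R]_n) : vnorm v ^+ 2 = \sum_i v i 0 ^+ 2.
Proof. by rewrite /vnorm sqr_sqrtr // sumsq_ge0. Qed.

Lemma vnormD n (u v : 'cV[R]_n) : vnorm (u + v) <= vnorm u + vnorm v.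
Proof.
rewrite -(ler_pXn2r (_ : (0 < 2)%N)) ?nnegrE ?addr_ge0 ?vnorm_ge0 //.
rewrite vnorm_sq.
have -> : \sum_i (u + v) i 0 ^+ 2 = \sum_i u i 0 ^+ 2 + \sum_i v i 0 ^+ 2
      + 2 * \sum_i u i 0 * v i 0.
  rewrite mulr_sumr -!big_split /=; apply: eq_bigr => i _; rewrite mxE; ring.
have H := CS (fun i => u i 0) (fun i => v i 0).
rewrite /= -!vnorm_sq in H.
set S := \sum_i u i 0 * v i 0 in H *.
have h1 := vnorm_ge0 u; have h2 := vnorm_ge0 v.
have : S <= vnorm u * vnorm v.
  have : `|S| <= vnorm u * vnorm v.
    rewrite -(ler_pXn2r (_ : (0 < 2)%N)) ?nnegrE ?mulr_ge0 // real_normK ?num_real //.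
    by rewrite exprMn.
  by move=> a; apply: le_trans (ler_norm S) a.
clear H; move=> H; rewrite sqrrD -!vnorm_sq.
clearbody S; have := vnorm_ge0 u; have := vnorm_ge0 v; lra.
Qed.

Lemma vnormZ n (c : R) (v : 'cV[R]_n) : vnorm (c *: v) = `|c| * vnorm v.
Proof.
rewrite /vnorm -(sqrtr_sqr c) -sqrtrM ?sqr_ge0 // mulr_sumr; congr Num.sqrt.
by apply: eq_bigr => i _; rewrite mxE; ring.
Qed.

Lemma vnorm_le n (u v : 'cV[R]_n) :
  (forall i, `|u i 0| <= `|v i 0|) -> vnorm u <= vnorm v.
Proof.
move=> H; rewrite /vnorm ler_sqrt ?sumsq_ge0 //; apply: ler_sum => i _.
rewrite -[u i 0 ^+ 2]real_normK ?num_real // -[v i 0 ^+ 2]real_normK ?num_real //.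
by rewrite lerXn2r ?nnegrE.
Qed.

Lemma vnorm_had n (a v : 'cV[R]_n) (c : R) : 0 <= c ->
  (forall i, `|a i 0| <= c) -> vnorm (hadamard a v) <= c * vnorm v.
Proof.
move=> c0 H; rewrite -(ger0_norm c0) -vnormZ; apply: vnorm_le => i.
rewrite !mxE !normrM (ger0_norm c0); apply: ler_wpM2r => //.
Qed.

Lemma vnorm_entry n (f : R -> R) (v : 'cV[R]_n) :
  (forall t, `|f t| <= `|t|) -> vnorm (entrywise f v) <= vnorm v.
Proof. move=> H; apply: vnorm_le => i; rewrite mxE; exact: H. Qed.

Lemma vnorm_col n (a b : 'cV[R]_n) :
  vnorm (col_mx a b) <= vnorm a + vnorm b /\ vnorm a <= vnorm (col_mx a b)
  /\ vnorm b <= vnorm (col_mx a b).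
Proof.
have E : \sum_(i < n + n) col_mx a b i 0 ^+ 2 = \sum_i a i 0 ^+ 2 + \sum_i b i 0 ^+ 2.
  by rewrite big_split_ord /=; congr (_ + _); apply: eq_bigr => i _;
    rewrite ?col_mxEu ?col_mxEd.
have ha := sumsq_ge0 a; have hb := sumsq_ge0 b.
rewrite /vnorm E; split; last split.
- rewrite -(ler_pXn2r (_ : (0 < 2)%N)) ?nnegrE ?addr_ge0 ?sqrtr_ge0 //.
  rewrite sqr_sqrtr ?addr_ge0 // sqrrD !sqr_sqrtr //.
  have := mulr_ge0 (sqrtr_ge0 (\sum_i a i 0 ^+ 2)) (sqrtr_ge0 (\sum_i b i 0 ^+ 2)).
  lra.
- rewrite ler_sqrt ?addr_ge0 //; lra.
- rewrite ler_sqrt ?addr_ge0 //; lra.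
Qed.

Lemma entry_le_vnorm n (v : 'cV[R]_n) i : `|v i 0| <= vnorm v.
Proof.
rewrite -(ler_pXn2r (_ : (0 < 2)%N)) ?nnegrE ?vnorm_ge0 // real_normK ?num_real //.
rewrite vnorm_sq (bigD1 i) //= lerDl; apply: sumr_ge0 => j _; apply: sqr_ge0.
Qed.

Lemma vnorm_bound n (v : 'cV[R]_n) (c : R) : (forall i, `|v i 0| <= c) ->
  vnorm v <= Num.sqrt (n%:R * c ^+ 2).
Proof.
move=> H; rewrite /vnorm ler_sqrt; last by apply: mulr_ge0 => //; apply: sqr_ge0.
have -> : n%:R * c ^+ 2 = \sum_(i < n) c ^+ 2 by rewrite sumr_const card_ord mulr_natl.
apply: ler_sum => i _; rewrite -real_normK ?num_real //.
have c0 : 0 <= c by apply: le_trans (normr_ge0 _) (H i).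
by rewrite lerXn2r ?nnegrE //; apply: H.
Qed.

Lemma vnorm0 n : vnorm (0 : 'cV[R]_n) = 0.
Proof. by rewrite /vnorm big1 ?sqrtr0 // => i _; rewrite mxE expr0n. Qed.

Lemma mnorm2_prop m n (M : 'M[R]_(m, n)) :
  0 <= mnorm2 M /\ forall v, vnorm (M *m v) <= mnorm2 M * vnorm v.
Proof.
set K := \sum_i \sum_j `|M i j|.
set E := [set vnorm (M *m v) | v in [set v : 'cV[R]_n | vnorm v <= 1]].
have hs : has_sup E.
  split; first by exists (vnorm (M *m 0)), 0 => //; rewrite /= vnorm0.
  exists (Num.sqrt (m%:R * K ^+ 2)) => _ [v v1 <-]; apply: vnorm_bound => i.
  rewrite mxE; apply: le_trans (ler_norm_sum _ _ _) _.
  apply: (@le_trans _ _ (\sum_j `|M i j|)).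
    apply: ler_sum => j _; rewrite normrM.
    have := le_trans (entry_le_vnorm v j) v1 => h.
    by rewrite -[leRHS]mulr1 ler_wpM2l.
  rewrite /K (bigD1 i) //= lerDl; apply: sumr_ge0 => k _; apply: sumr_ge0 => j _ //.
have ub := sup_upper_bound hs.
have z0 : 0 <= mnorm2 M.
  apply: le_trans (ub (vnorm (M *m 0)) _); first exact: vnorm_ge0.
  by exists 0 => //; rewrite /= vnorm0.
split => // v.
have [v0|vn0] := eqVneq (vnorm v) 0.
  have -> : M *m v = 0.
    have -> : v = 0.
      apply/matrixP => i j; rewrite (ord1 j) mxE; apply/eqP; rewrite -normr_le0.
      by rewrite -v0 entry_le_vnorm.
    by rewrite mulmx0.
  by rewrite v0 mulr0 vnorm0.
have vp : 0 < vnorm v by rewrite lt_def vn0 vnorm_ge0.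
have : vnorm (M *m ((vnorm v)^-1 *: v)) <= mnorm2 M.
  apply: ub; exists ((vnorm v)^-1 *: v) => //.
  by rewrite /= vnormZ ger0_norm ?invr_ge0 ?vnorm_ge0 // mulVf.
rewrite -scalemxAr vnormZ ger0_norm ?invr_ge0 ?vnorm_ge0 // mulrC -ler_pdivlMr //.
  by rewrite invrK.
by rewrite invr_gt0.
Qed.

End Vec.
Section Spec.
Local Open Scope complex_scope.
Variable R : realType.

Lemma spec_lemma (sgf sgi sgo n : R) : 0 < sgf -> 0 <= sgi -> 0 <= sgo -> 0 <= n ->
  spectral_radius (A_mat sgf sgi sgo n) < 1 -> sgf + sgo * sgi * n < 1.
Proof.
move=> f0 i0 o0 n0.
set t := sgf + sgo * sgi * n.
have t0 : 0 <= t by rewrite /t; apply: addr_ge0; [exact: ltW| rewrite !mulr_ge0].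
rewrite /spectral_radius.
set M := map_mx _ _.
set S := [set cmodulus l | l in _].
have HM : M = map_mx (real_complex R) (A_mat sgf sgi sgo n) by [].
pose vR : 'rV[R]_2 := \row_(j < 2) (if (j == 0 :> nat) then sgf else sgi * n).
have eig : eigenvalue M (real_complex R t).
  apply/eigenvalueP; exists (map_mx (real_complex R) vR).
    rewrite HM -map_mxM -map_mxZ; congr map_mx.
    apply/matrixP => i j; rewrite !mxE !big_ord_recl big_ord0 !mxE /=.
    case: j => [[|[|j]] Hj] //=; rewrite /t; ring.
  rewrite map_mx_eq0; apply/eqP => /matrixP /(_ 0 0); rewrite !mxE /=.
  by move=> h; move: f0; rewrite h ltxx.
have ub : ubound S t.
  move=> _ [l /eigenvalueP [v Hv vn0] <-].
  have Ej : forall j : 'I_2, (v 0 0 + (sgo%:C) * v 0 1) * (A_mat sgf sgi sgo n 0 j)%:C = l * v 0 j.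
    move=> j; move/matrixP: Hv => /(_ 0 j); rewrite !mxE !big_ord_recl big_ord0 !mxE /=.
    have c : forall x : R, x +i* 0 = x%:C by [].
    have i0' : ord0 = 0 :> 'I_2 by [].
    have i1 : lift ord0 ord0 = 1 :> 'I_2 by apply: val_inj.
    move=> <-; case: j => [[|[|j]] Hj] //=; rewrite ?addr0 !c i0' i1 ?rmorphM /=; ring.
  set s := v 0 0 + sgo%:C * v 0 1 in Ej.
  have E0 := Ej 0; have E1 := Ej 1.
  rewrite !mxE /= in E0 E1.
  have [sz|snz] := eqVneq s 0.
    have l0 : l = 0.
      apply/eqP; apply: contraT => ln0; case/negP: vn0; apply/eqP/matrixP => i j.
      rewrite (ord1 i) mxE; case: j => [[|[|j]] Hj] //=.
      - have : l * v 0 0 = 0 by rewrite -E0 sz mul0r.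
        move/eqP; rewrite mulf_eq0 (negbTE ln0) /= => /eqP h.
        by rewrite -h; congr (v 0 _); apply: val_inj.
      - have : l * v 0 1 = 0 by rewrite -E1 sz mul0r.
        move/eqP; rewrite mulf_eq0 (negbTE ln0) /= => /eqP h.
        by rewrite -h; congr (v 0 _); apply: val_inj.
    by rewrite l0 /cmodulus /= expr0n /= addr0 sqrtr0.
  have : l * s = s * t%:C.
    rewrite {1}/s mulrDr -E0 mulrCA -E1 /t rmorphD !rmorphM /=; ring.
  rewrite mulrC => /(mulfI snz) ->.
  rewrite /cmodulus /= expr0n /= addr0 sqrtr_sqr ger0_norm //.
have hs : has_sup S by split; [exists (cmodulus t%:C), t%:C | exists t].
have : cmodulus t%:C <= sup S by apply: sup_upper_bound => //; exists t%:C.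
rewrite /cmodulus /= expr0n /= addr0 sqrtr_sqr ger0_norm //.
move=> h1 h2; exact: le_lt_trans h1 h2.
Qed.
End Spec.
Section Gate.
Variable R : realType.

Lemma le_bigmax0 m (F : 'I_m -> R) i : F i <= \big[Num.max/0]_(j < m) F j.
Proof.
have : i \in index_enum 'I_m by rewrite mem_index_enum.
elim: (index_enum _) => [|a s IH] //; rewrite big_cons in_cons.
case/orP => [/eqP ->|/IH h]; first by rewrite le_max lexx.
by rewrite le_max h orbT.
Qed.

Lemma gate_le nu nx umax (W : 'M[R]_(nx, nu)) (U : 'M[R]_nx) (b : 'cV[R]_nx)
  (u : 'cV[R]_nu) (xi : 'cV[R]_nx) :
  input_set umax u -> (forall j, `|xi j 0| <= 1) ->
  forall i, `|(W *m u + U *m xi + b) i 0| <= gate_bound umax W U b.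
Proof.
move=> Hu Hxi i.
apply: le_trans (le_bigmax0 _ i).
rewrite big_split_ord big_split_ord /= big_ord1 row_mxEr.
under eq_bigr do rewrite !row_mxEl.
under [X in _ <= _ + X + _]eq_bigr do rewrite row_mxEl row_mxEr.
rewrite !mxE.
apply: le_trans (ler_normD _ _) _; apply: lerD => //.
apply: le_trans (ler_normD _ _) _; apply: lerD.
- apply: le_trans (ler_norm_sum _ _ _) _; apply: ler_sum => j _.
  rewrite mxE !normrM mulrC; apply: ler_wpM2r => //.
  have /andP[h1 h2] := Hu j.
  have : `|u j 0| <= umax by rewrite ler_norml h1 h2.
  move=> h; apply: le_trans h (ler_norm _).
- apply: le_trans (ler_norm_sum _ _ _) _; apply: ler_sum => j _.
  rewrite normrM; rewrite -[leRHS]mulr1; apply: ler_wpM2l => //.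
Qed.

Lemma gate_sig nu nx umax (W : 'M[R]_(nx, nu)) (U : 'M[R]_nx) (b : 'cV[R]_nx)
  (u : 'cV[R]_nu) (xi : 'cV[R]_nx) :
  input_set umax u -> (forall j, `|xi j 0| <= 1) ->
  forall i, `|entrywise (@sigma_g R) (W *m u + U *m xi + b) i 0| <= sbar_g umax W U b.
Proof.
move=> Hu Hxi i; rewrite mxE ger0_norm; last exact/ltW/sigma_g_gt0.
apply: le_trans (sigma_g_mono (ler_norm _)) _.
exact/sigma_g_mono/gate_le.
Qed.
End Gate.

Section Main.
Variable R : realType.

Lemma lin_K (c : R) : 0 < c -> class_K (fun s => c * s).
Proof.
move=> c0; split; last split.
- apply: continuous_subspaceT => x; exact: mulrl_continuous.
- by move=> s t _ st; rewrite ltr_pM2l.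
- by rewrite mulr0.
Qed.

Lemma lin_Kinf (c : R) : 0 < c -> class_Kinf (fun s => c * s).
Proof.
move=> c0; split; first exact: lin_K.
move=> M; exists (`|M| / c + 1); split.
  by apply: addr_ge0 => //; apply: divr_ge0 => //; exact: ltW.
rewrite mulrDr mulr1 mulrCA divff ?mulr1 ?gt_eqF //.
have := ler_norm M; lra.
Qed.

Lemma geo_KL (C t : R) : 0 < C -> 0 < t -> t < 1 ->
  class_KL (fun s k => C * s * t ^+ k).
Proof.
move=> C0 t0 t1; split.
  move=> k; have := @lin_K (C * t ^+ k) (mulr_gt0 C0 (exprn_gt0 _ t0)).
  by congr class_K; apply: funext => s; rewrite mulrAC.
move=> s s0; split.
  move=> k; rewrite exprS mulrCA gtr_pMl //; by rewrite !mulr_gt0 // exprn_gt0.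
have := @cvg_geometric R (C * s) t; rewrite gtr0_norm // => /(_ t1).
by [].
Qed.
End Main.

Section Dyn.
Variables (R : realType) (nu nx : nat).
Variables (Wf Wi Wo Wc : 'M[R]_(nx, nu)) (Uf Ui Uo Uc : 'M[R]_nx)
    (bf bi bo bc : 'cV[R]_nx) (umax : R).

Lemma step_xi_le1 (chi : lstm_state R nx) (u : 'cV[R]_nu) j :
  `|(lstm_step Wf Wi Wo Wc Uf Ui Uo Uc bf bi bo bc chi u).2 j 0| <= 1.
Proof.
rewrite /lstm_step /= !mxE normrM -[1]mulr1.
apply: ler_pM => //.
  rewrite ger0_norm; [exact: sigma_g_le1 | exact/ltW/sigma_g_gt0].
exact: tanh_le1.
Qed.

Lemma step_bound (chi : lstm_state R nx) (u : 'cV[R]_nu) :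
  input_set umax u -> (forall j, `|chi.2 j 0| <= 1) ->
  let chi' := lstm_step Wf Wi Wo Wc Uf Ui Uo Uc bf bi bo bc chi u in
  vnorm chi'.1 <= sbar_g umax Wf Uf bf * vnorm chi.1 +
     sbar_g umax Wi Ui bi * (mnorm2 Wc * vnorm u + mnorm2 Uc * vnorm chi.2 + vnorm bc)
  /\ vnorm chi'.2 <= sbar_g umax Wo Uo bo * vnorm chi'.1.
Proof.
move=> Hu Hxi chi'; split.
- rewrite /chi' /lstm_step /=.
  apply: le_trans (vnormD _ _) _; apply: lerD.
    exact: (vnorm_had _ (ltW (sigma_g_gt0 _)) (gate_sig Wf Uf bf Hu Hxi)).
  apply: le_trans (vnorm_had _ (ltW (sigma_g_gt0 _)) (gate_sig Wi Ui bi Hu Hxi)) _.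
  apply: ler_wpM2l; first exact/ltW/sigma_g_gt0.
  apply: le_trans (vnorm_entry _ (@tanh_abs R)) _.
  apply: le_trans (vnormD _ _) _; apply: lerD => //.
  apply: le_trans (vnormD _ _) _; apply: lerD.
    exact: (proj2 (mnorm2_prop Wc)).
  exact: (proj2 (mnorm2_prop Uc)).
- rewrite /chi' /lstm_step /=.
  apply: le_trans (vnorm_had _ (ltW (sigma_g_gt0 _)) (gate_sig Wo Uo bo Hu Hxi)) _.
  apply: ler_wpM2l; first exact/ltW/sigma_g_gt0.
  exact: (vnorm_entry _ (@tanh_abs R)).
Qed.
End Dyn.

Theorem theorem1 (R : realType) (nu nx ny : nat)
    (Wf Wi Wo Wc : 'M[R]_(nx, nu)) (Uf Ui Uo Uc : 'M[R]_nx)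
    (C : 'M[R]_(ny, nx)) (bf bi bo bc : 'cV[R]_nx) (b_y : 'cV[R]_ny)
    (umax : R) :
  let sgf := sbar_g umax Wf Uf bf in
  let sgi := sbar_g umax Wi Ui bi in
  let sgo := sbar_g umax Wo Uo bo in
  let scc := sbar_c umax Wc Uc bc in
  spectral_radius (A_mat sgf sgi sgo (mnorm2 Uc)) < 1 ->
  exists (beta : R -> nat -> R) (gamma_v gamma_b : R -> R),
    class_KL beta /\ class_Kinf gamma_v /\ class_Kinf gamma_b /\
    forall (k : nat) (chi0 : lstm_state R nx) (u : nat -> 'cV[R]_nu),
      state_set sgi scc sgf chi0 ->
      (forall t : nat, input_set umax (u t)) ->
      state_norm (lstm_traj Wf Wi Wo Wc Uf Ui Uo Uc bf bi bo bc chi0 u k)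
        <= beta (state_norm chi0) k
           + gamma_v (sup [set vnorm (u h) | h in [set: nat]])
           + gamma_b (vnorm bc).
Proof.
move=> sgf sgi sgo scc Hspec.
have f0 : 0 < sgf by exact: sigma_g_gt0.
have i0 : 0 < sgi by exact: sigma_g_gt0.
have o0 : 0 < sgo by exact: sigma_g_gt0.
have f1 : sgf <= 1 by exact: sigma_g_le1.
have i1 : sgi <= 1 by exact: sigma_g_le1.
have o1 : sgo <= 1 by exact: sigma_g_le1.
set n := mnorm2 Uc.
set cW := mnorm2 Wc.
have n0 : 0 <= n by case: (mnorm2_prop Uc).
have cW0 : 0 <= cW by case: (mnorm2_prop Wc).
set t := sgf + sgo * sgi * n.
have t1 : t < 1 by apply: spec_lemma => //; exact: ltW.
have t0 : 0 < t by rewrite /t; have := mulr_ge0 (mulr_ge0 (ltW o0) (ltW i0)) n0; lra.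
set w := (1 - t)^-1.
have w0 : 0 < w by rewrite /w invr_gt0 subr_gt0.
have w1 : 1 <= w by rewrite /w invf_ge1 ?subr_gt0 //; lra.
have wE : w * (1 - t) = 1 by rewrite /w mulVf // subr_eq0 gt_eqF.
set Cb := 1 + 2 * (1 + n) / t.
set Gv := 1 + 2 * cW * w.
set Gb := 1 + 2 * w.
have Cb1 : 1 <= Cb.
  have : 0 <= 2 * (1 + n) / t by apply: divr_ge0; [apply: mulr_ge0; lra | exact: ltW].
  rewrite /Cb; lra.
have Gv0 : 0 < Gv.
  have : 0 <= 2 * cW * w by apply: mulr_ge0; [apply: mulr_ge0 => //; lra | exact: ltW].
  rewrite /Gv; lra.
have Gb0 : 0 < Gb.
  have : 0 <= 2 * w by apply: mulr_ge0; [lra | exact: ltW].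
  rewrite /Gb; lra.
exists (fun s k => Cb * s * t ^+ k), (fun s => Gv * s), (fun s => Gb * s).
split; first by apply: geo_KL => //; lra.
split; first exact: lin_Kinf.
split; first exact: lin_Kinf.
move=> k chi0 u Hchi0 Hu.
set traj := lstm_traj Wf Wi Wo Wc Uf Ui Uo Uc bf bi bo bc chi0 u.
set U := sup _.
set B := vnorm bc.
have B0 : 0 <= B by exact: vnorm_ge0.
have HU : forall h, vnorm (u h) <= U.
  move=> h; apply: sup_upper_bound; last by exists h.
  split; first by exists (vnorm (u 0%N)), 0%N.
  exists (Num.sqrt (nu%:R * umax ^+ 2)) => _ [h' _ <-].
  apply: vnorm_bound => j; have /andP[a b] := Hu h' j; rewrite ler_norml a b //.
have U0 : 0 <= U by apply: le_trans (HU 0%N); exact: vnorm_ge0.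
have Inv : forall k j, `|(traj k).2 j 0| <= 1.
  case=> [|k'] j /=.
    have [_ /andP[a b]] := Hchi0 j; rewrite ler_norml; apply/andP; split; exact: ltW.
  exact: step_xi_le1.
set p := fun k => vnorm (traj k).1.
set q := fun k => vnorm (traj k).2.
set D := sgi * (cW * U + B).
have D0 : 0 <= D by rewrite /D mulr_ge0 ?addr_ge0 ?mulr_ge0 //; exact: ltW.
have step : forall k, p k.+1 <= sgf * p k + sgi * n * q k + D /\ q k.+1 <= sgo * p k.+1.
  move=> k'; have [h1 h2] := step_bound Wf Wi Wo Wc Uf Ui Uo Uc bf bi bo bc (Hu k') (Inv k').
  have h1' : p k'.+1 <= sgf * p k' + sgi * (cW * vnorm (u k') + n * q k' + B) := h1.
  have h2' : q k'.+1 <= sgo * p k'.+1 := h2.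
  split => //.
  have e : sgi * (cW * vnorm (u k') + n * q k' + B) = sgi * n * q k' + sgi * (cW * vnorm (u k') + B) by ring.
  have e2 : sgi * (cW * vnorm (u k') + B) <= D.
    rewrite /D; apply: ler_wpM2l; first exact: ltW.
    by rewrite lerD2r ler_wpM2l // HU.
  lra.
set z0 := sgf * p 0%N + sgi * n * q 0%N.
set X := D * w.
have X0 : 0 <= X by rewrite /X mulr_ge0 // ltW.
have XE : t * X + D = X.
  rewrite /X -{2}(mulr1 D) -wE; ring.
have DX : D <= X by rewrite /X -{1}(mulr1 D) ler_wpM2l.
have p_ge0 : forall k, 0 <= p k by move=> k'; exact: vnorm_ge0.
have q_ge0 : forall k, 0 <= q k by move=> k'; exact: vnorm_ge0.
have claim : forall k, p k.+1 <= t ^+ k * z0 + X.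
  elim=> [|k' IH].
    have [h _] := step 0%N; rewrite expr0 mul1r; rewrite /z0; lra.
  have [h _] := step k'.+1.
  have [_ hq] := step k'.
  have h3 : sgi * n * q k'.+1 <= sgi * n * (sgo * p k'.+1).
    by apply: ler_wpM2l => //; rewrite mulr_ge0 // ltW.
  have h4 : sgf * p k'.+1 + sgi * n * (sgo * p k'.+1) = t * p k'.+1 by rewrite /t; ring.
  have h5 : t * p k'.+1 <= t * (t ^+ k' * z0 + X) by apply: ler_wpM2l => //; exact: ltW.
  have h6 : t * (t ^+ k' * z0 + X) = t ^+ k'.+1 * z0 + t * X by rewrite exprS; ring.
  apply: le_trans h _; rewrite -[X in _ <= _ + X]XE addrA lerD2r -h6.
  apply: le_trans _ h5; rewrite -h4 lerD2l; exact: h3.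
set s0 := state_norm chi0.
have [_ [hp0 hq0]] := vnorm_col chi0.1 chi0.2.
rewrite -/(state_norm chi0) -/s0 in hp0 hq0.
have s00 : 0 <= s0 by exact: vnorm_ge0.
have z0le : z0 <= (1 + n) * s0.
  have a1 : sgf * p 0%N <= 1 * s0 by apply: ler_pM => //; exact: ltW.
  have a2 : sgi * n * q 0%N <= 1 * n * s0.
    by apply: ler_pM => //; [rewrite mulr_ge0 // ltW | apply: ler_pM => //; exact: ltW].
  rewrite /z0; lra.
have GE : Gv * U + Gb * B = U + B + 2 * ((cW * U + B) * w) by rewrite /Gv /Gb; ring.
have XB : X <= (cW * U + B) * w.
  rewrite /X /D -mulrA -[leRHS]mul1r; apply: ler_wpM2r => //.
  by rewrite mulr_ge0 // ?addr_ge0 ?mulr_ge0 // ltW.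
have hU : 0 <= (cW * U + B) * w by rewrite mulr_ge0 ?addr_ge0 ?mulr_ge0 // ltW.
case: k => [|k] /=.
  have : s0 <= Cb * s0 by rewrite ler_peMl.
  rewrite expr0 mulr1 -/s0 -addrA GE; lra.
have [hc _] := vnorm_col (traj k.+1).1 (traj k.+1).2.
rewrite -/(state_norm (traj k.+1)) in hc.
have [_ hq] := step k.
have hq' : q k.+1 <= p k.+1.
  apply: le_trans hq _; rewrite -[leRHS]mul1r; apply: ler_wpM2r => //.
have hk := claim k.
have e1 : t ^+ k * z0 <= t ^+ k * ((1 + n) * s0) by apply: ler_wpM2l => //; rewrite exprn_ge0 // ltW.
have e2 : 2 * (t ^+ k * ((1 + n) * s0)) <= Cb * s0 * t ^+ k.+1.
  have -> : Cb * s0 * t ^+ k.+1 = s0 * t ^+ k.+1 + 2 * (t ^+ k * ((1 + n) * s0)).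
    rewrite /Cb exprS; field; exact: lt0r_neq0.
  rewrite lerDr; apply: mulr_ge0 => //; apply: exprn_ge0; exact: ltW.
have hcE : state_norm (traj k.+1) <= p k.+1 + q k.+1 by [].
rewrite -addrA GE.
lra.
Qed.
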